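(* Let $X$ be a shift space over $\mathcal{A}$, $\sigma:\mathcal{A}^*\to\mathcal{B}^*$ an injective and strongly left proper morphism with first letter $\ell$, $Y$ the image of $X$ under $\sigma$ and $v\in\mathcal{L}(X)$. A word $u$ is a bispecial extended image of $v$ if and only if there exist $(a_1,b_1),(a_2,b_2)\in E_X(v)$ with $a_1\ne a_2$, $b_1\ne b_2$ and $u=s(a_1,a_2)\,\sigma(v)\,p(b_1,b_2)$. In particular, the antecedent $v$ of a bispecial word $u\in\mathcal{L}(Y)$ is bispecial in $X$.
   Context: A shift space over a finite alphabet $\mathcal{A}$ is a closed shift-invariant $X\subseteq\mathcal{A}^{\mathbb{Z}}$ in which all letters occur; $\mathcal{L}(X)$ is its set of finite factors. For $w\in\mathcal{L}(X)$: $E^-_X(w)=\{a: aw\in\mathcal{L}(X)\}$, $E^+_X(w)=\{b:wb\in\mathcal{L}(X)\}$, $E_X(w)=\{(a,b):awb\in\mathcal{L}(X)\}$; $w$ is bispecial if $\#E^-_X(w)\ge2$ and $\#E^+_X(w)\ge2$. Morphisms are non-erasing; $\sigma$ is strongly left proper with first letter $\ell$ if every $\sigma(a)$ starts with $\ell$ and contains exactly one occurrence of $\ell$. The image of $X$ under $\sigma$ is $Y=\{S^k\sigma(x):x\in X,0\le k<|\sigma(x_0)|\}$. For $a_1,a_2\in\mathcal{A}$, $s(a_1,a_2)$ (resp. $p(a_1,a_2)$) is the longest common suffix (resp. prefix) of $\sigma(a_1)$ and $\sigma(a_2)$. Fact (antecedents): for every non-empty $u\in\mathcal{L}(Y)$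 containing $\ell$ there is a unique triple $(s,v,p)$ with $v\in\mathcal{L}(X)$, $u=s\sigma(v)p$, such that for some $(a,b)\in E_X(v)$, $s$ is a proper suffix of $\sigma(a)$ and $p$ is a non-empty prefix of $\sigma(b)$. Then $v$ is called the antecedent of $u$ and $u$ an extended image of $v$ (extended images always contain $\ell$). *)

(* Defs.v *)
From mathcomp Require Import all_boot all_order all_algebra.
Set Implicit Arguments. Unset Strict Implicit. Unset Printing Implicit Defensive.
Import GRing.Theory Num.Theory.
Local Open Scope ring_scope.

Section Defs.
Variables (A B : finType).

Definition shift (x : int -> A) : int -> A := fun i => x (i + 1).

Definition factor_at (T : Type) (x : int -> T) (i : int) (n : nat) : seq T :=
  map (fun j : nat => x (i + j%:Z)) (iota 0 n).

(* shift space: closed (product topology), shift-invariant (S X = X),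
   and every letter occurs *)
Definition shift_space (X : (int -> A) -> Prop) : Prop :=
  [/\ (forall x, X x <-> X (shift x)),
      (forall x, (forall n : nat, exists y, X y /\
                    forall i : int, (`|i| <= n)%N -> y i = x i) -> X x) &
      (forall a : A, exists x, X x /\ exists i, x i = a)].

Definition lang (T : Type) (X : (int -> T) -> Prop) (w : seq T) : Prop :=
  exists x, X x /\ exists i, w = factor_at x i (size w).

Definition ext_pair (X : (int -> A) -> Prop) (w : seq A) (a b : A) : Prop :=
  lang X (a :: rcons w b).

Definition sigma_word (sigma : A -> seq B) (w : seq A) : seq B :=
  flatten (map sigma w).

Definition non_erasing (sigma : A -> seq B) : Prop :=
  forall a, sigma a != [::].

Definition strongly_left_proper (sigma : A -> seq B) (l : B) : Prop :=
  forall a, (exists w, sigma a = l :: w) /\ count_mem l (sigma a) = 1%N.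

(* position of the block sigma(x_n) inside sigma(x); sigma(x_0) starts at 0 *)
Definition pos (sigma : A -> seq B) (x : int -> A) (n : int) : int :=
  match n with
  | Posz m => (\sum_(i < m) size (sigma (x (Posz i))))%:Z
  | Negz m => - (\sum_(i < m.+1) size (sigma (x (Negz i))))%:Z
  end.

(* z is the bi-infinite word sigma(x) *)
Definition is_sigma_img (sigma : A -> seq B) (x : int -> A) (z : int -> B) : Prop :=
  forall n : int, factor_at z (pos sigma x n) (size (sigma (x n))) = sigma (x n).

Definition image_space (X : (int -> A) -> Prop) (sigma : A -> seq B)
  (y : int -> B) : Prop :=
  exists x z (k : nat), [/\ X x, is_sigma_img sigma x z,
     (k < size (sigma (x 0)))%N & forall i, y i = z (i + k%:Z)].

Definition ext_image (X : (int -> A) -> Prop) (sigma : A -> seq B) (l : B)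
  (u : seq B) (v : seq A) : Prop :=
  [/\ lang (image_space X sigma) u, u != [::], l \in u &
    exists (s p : seq B) (a b : A),
      [/\ lang X v, ext_pair X v a b,
          suffix s (sigma a) && (size s < size (sigma a))%N,
          prefix p (sigma b) && (p != [::]) &
          u = s ++ sigma_word sigma v ++ p]].
End Defs.

Section Bisp.
Variable T : eqType.
Definition bispecial (L : seq T -> Prop) (w : seq T) : Prop :=
  [/\ L w,
      exists a1 a2, [/\ a1 != a2, L (a1 :: w) & L (a2 :: w)] &
      exists b1 b2, [/\ b1 != b2, L (rcons w b1) & L (rcons w b2)]].

Fixpoint lcp (s t : seq T) : seq T :=
  match s, t with
  | x :: s', y :: t' => if x == y then x :: lcp s' t' else [::]
  | _, _ => [::]
  end.
Definition lcs (s t : seq T) : seq T := rev (lcp (rev s) (rev t)).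
End Bisp.

(* Main.v *)
Require Import Defs.
From mathcomp Require Import all_boot all_order all_algebra.
From mathcomp Require Import zify.
Set Implicit Arguments. Unset Strict Implicit. Unset Printing Implicit Defensive.
Import GRing.Theory Num.Theory.


Lemma catEq (T : Type) (s1 s2 t1 t2 : seq T) :
  s1 ++ s2 = t1 ++ t2 ->
  (exists r, s1 = t1 ++ r /\ t2 = r ++ s2) \/
  (exists r, t1 = s1 ++ r /\ s2 = r ++ t2).
Proof.
elim: s1 t1 => [|x s1 IH] [|y t1] /=.
- by move=> ->; left; exists [::].
- by move=> ->; right; exists (y :: t1).
- by move=> <-; left; exists (x :: s1).
- case=> -> /IH [[r [-> ->]]|[r [-> ->]]]; [left|right]; by exists r.
Qed.

Lemma size_factor_at (T : Type) (y : int -> T) i n : size (factor_at y i n) = n.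
Proof. by rewrite /factor_at size_map size_iota. Qed.

Lemma nth_factor_at (T : Type) (d : T) (y : int -> T) i n k :
  (k < n)%N -> nth d (factor_at y i n) k = y (i + k%:Z)%R.
Proof.
move=> hk; rewrite /factor_at (nth_map 0%N) ?size_iota // nth_iota //.
Qed.

Lemma factor_at_sub (T : Type) (y : int -> T) i L a n :
  (a + n <= L)%N ->
  factor_at y (i + a%:Z)%R n = take n (drop a (factor_at y i L)).
Proof.
move=> h; apply: (@eq_from_nth _ (y i)).
  rewrite size_factor_at size_take size_drop size_factor_at.
  case: ltnP => //; lia.
rewrite size_factor_at => k hk.
rewrite nth_factor_at // nth_take // nth_drop nth_factor_at; last lia.
by congr y; rewrite PoszD addrA.
Qed.

Lemma factor_at_cat (T : Type) (y : int -> T) i a b :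
  factor_at y i (a + b) = factor_at y i a ++ factor_at y (i + a%:Z)%R b.
Proof.
rewrite /factor_at iotaD map_cat; congr (_ ++ _).
rewrite add0n -{1}(addn0 a) iotaDl -map_comp; apply: eq_map => j /=.
by rewrite PoszD addrA.
Qed.

Lemma lang_infix (T : Type) (X : (int -> T) -> Prop) al w be :
  lang X (al ++ w ++ be) -> lang X w.
Proof.
case=> x [Xx [i hi]]; exists x; split => //; exists (i + (size al)%:Z)%R.
rewrite (@factor_at_sub _ _ _ (size (al ++ w ++ be))); last first.
  by rewrite !size_cat; lia.
by rewrite -hi drop_size_cat // take_size_cat.
Qed.

Lemma lang_rcons (T : Type) (X : (int -> T) -> Prop) w :
  lang X w -> exists e, lang X (rcons w e).
Proof.
case=> x [Xx [i hi]]; exists (x (i + (size w)%:Z)%R); exists x; split => //.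
exists i; rewrite size_rcons -addn1 factor_at_cat -hi cats1; congr rcons.
by rewrite /factor_at /= addr0.
Qed.

Lemma lcp_cat (T : eqType) (d : T) (p r1 r2 : seq T) :
  nth d r1 0 != nth d r2 0 -> lcp (p ++ r1) (p ++ r2) = p.
Proof.
elim: p => [|x p IH] /=; last by rewrite eqxx => /IH ->.
by case: r1 => [|x1 r1]; case: r2 => [|x2 r2] //= /negbTE ->.
Qed.

Lemma lcp_spec (T : eqType) (s1 s2 : seq T) :
  exists r1 r2, [/\ s1 = lcp s1 s2 ++ r1, s2 = lcp s1 s2 ++ r2 &
    forall e1 e2 r1' r2', r1 = e1 :: r1' -> r2 = e2 :: r2' -> e1 != e2].
Proof.
elim: s1 s2 => [|x s1 IH] [|y s2] /=.
- by exists [::], [::]; split.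
- by exists [::], (y :: s2); split.
- by exists (x :: s1), [::]; split.
case: eqP => [<-|ne].
  have [r1 [r2 [h1 h2 h3]]] := IH s2.
  by exists r1, r2; split => //=; congr cons.
exists (x :: s1), (y :: s2); split => // e1 e2 r1' r2' [<- _] [<- _].
by apply/eqP.
Qed.


Section Pos.
Variables (A B : finType) (sigma : A -> seq B) (x : int -> A).
Hypothesis ne : non_erasing sigma.
Local Open Scope ring_scope.

Notation P := (pos sigma x).
Definition W i m := sigma_word sigma (factor_at x i m).

Lemma pos_succ n : P (n + 1) = P n + (size (sigma (x n)))%:Z.
Proof.
case: n => [m|m].
  have -> : Posz m + 1 = Posz m.+1 by lia.
  by rewrite /= big_ord_recr /= PoszD.
case: m => [|m].
  have -> : Negz 0 + 1 = Posz 0 by [].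
  by rewrite /= big_ord0 big_ord1 addNr.
have -> : Negz m.+1 + 1 = Negz m by lia.
rewrite /= [in RHS]big_ord_recr /= PoszD opprD -addrA addNr addr0.
done.
Qed.

Lemma W_cat i a b : W i (a + b) = W i a ++ W (i + a%:Z) b.
Proof. by rewrite /W /sigma_word factor_at_cat map_cat flatten_cat. Qed.

Lemma W1 i : W i 1 = sigma (x i).
Proof. by rewrite /W /sigma_word /factor_at /= addr0 cats0. Qed.

Lemma pos_W i m : P (i + m%:Z) = P i + (size (W i m))%:Z.
Proof.
elim: m => [|m IH]; first by rewrite /W /factor_at /= !addr0.
rewrite -addn1 W_cat size_cat W1 PoszD addrA pos_succ IH -addrA -PoszD.
by rewrite PoszD addrA.
Qed.

Lemma size_W i m : (m <= size (W i m))%N.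
Proof.
elim: m => [|m IH] //; rewrite -addn1 W_cat size_cat W1.
have := ne (x (i + m%:Z)); case: (sigma (x (i + m%:Z))) => //= b0 l0 _; lia.
Qed.

Lemma W_sub (d0 : B) (lo : int) M (i : int) m j :
  lo <= i -> i + m%:Z <= lo + M%:Z -> (j < size (W i m))%N ->
  exists k, [/\ P i + j%:Z = P lo + k%:Z, (k < size (W lo M))%N &
     nth d0 (W lo M) k = nth d0 (W i m) j].
Proof.
move=> h1 h2 hj.
have [d hd] : exists d : nat, i = lo + d%:Z by exists (absz (i - lo)); lia.
have [e he] : exists e : nat, M = (d + m + e)%N by exists (M - (d + m))%N; lia.
subst i M.
rewrite !W_cat.
exists (size (W lo d) + j)%N; split.
- by rewrite pos_W PoszD addrA.
- by rewrite !size_cat -addnA ltn_add2l (leq_trans hj) // leq_addr.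
- by rewrite nth_cat size_cat ltn_add2l hj nth_cat ltnNge leq_addr /= addKn.
Qed.
End Pos.


Section Z.
Variables (A B : finType) (sigma : A -> seq B) (x : int -> A) (l : B).
Hypothesis ne : non_erasing sigma.
Local Open Scope ring_scope.
Notation P := (pos sigma x).
Notation W := (W sigma x).

Lemma P0 : P 0 = 0.
Proof. by rewrite /= big_ord0. Qed.

Lemma P_low (N : nat) : P (- N%:Z) <= - N%:Z.
Proof.
have := pos_W sigma x (- N%:Z) N; rewrite addNr P0 => h.
have := size_W x ne (- N%:Z) N; lia.
Qed.

Lemma P_up (N : nat) : N%:Z <= P N%:Z.
Proof.
have := pos_W sigma x 0 N; rewrite add0r P0 add0r => ->.
have := size_W x ne 0 N; lia.
Qed.

Definition zz (k : int) : B :=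
  let N := (absz k).+1 in nth l (W (- N%:Z) (N + N)) (absz (k - P (- N%:Z))).

Lemma zz_window i m j : (j < size (W i m))%N -> zz (P i + j%:Z) = nth l (W i m) j.
Proof.
move=> hj; rewrite /zz.
set k := P i + j%:Z; set N := (absz k).+1.
set i0 := - N%:Z; set j0 := absz (k - P i0).
set lo := i0 - (absz i)%:Z.
set M := (absz i + N + N + absz i + m)%N.
have hlo := P_low N; have hup := P_up N.
have hi0 : i0 + (N + N)%N%:Z = N%:Z by rewrite /i0; lia.
have hs : P i0 + (size (W i0 (N + N)))%:Z = P N%:Z by rewrite -pos_W hi0.
have hj0 : (j0 < size (W i0 (N + N)))%N.
  rewrite /j0 /i0; move: hs hlo hup; rewrite /i0 /k /N; lia.
have [k1 [e1 _ n1]] := @W_sub _ _ sigma x l lo M i m j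
   ltac:(rewrite /lo /i0; lia) ltac:(rewrite /lo /M /i0 /N; lia) hj.
have [k2 [e2 _ n2]] := @W_sub _ _ sigma x l lo M i0 (N + N) j0
   ltac:(rewrite /lo /i0; lia) ltac:(rewrite /lo /M /i0 /N; lia) hj0.
rewrite -n1 -n2; congr nth.
have : P i0 + j0%:Z = k by rewrite /j0; move: hlo; rewrite /i0 /k /N; lia.
move: e1 e2; rewrite -/k; lia.
Qed.

Lemma zz_factor i m : factor_at zz (P i) (size (W i m)) = W i m.
Proof.
apply: (@eq_from_nth _ l); rewrite ?size_factor_at // => j hj.
by rewrite nth_factor_at // (zz_window hj).
Qed.

Lemma zz_img : is_sigma_img sigma x zz.
Proof. by move=> n; rewrite -(W1 sigma x n) zz_factor. Qed.

Lemma img_factor z : is_sigma_img sigma x z ->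
  forall i m, factor_at z (P i) (size (W i m)) = W i m.
Proof.
move=> hz i; elim=> [|m IH]; first by rewrite /W /factor_at.
rewrite -addn1 W_cat size_cat factor_at_cat IH -pos_W W1 hz.
done.
Qed.
End Z.

Section Enc.
Local Open Scope ring_scope.

Lemma encode (A B : finType) (X : (int -> A) -> Prop) (sigma : A -> seq B) (l : B)
  t al w be : non_erasing sigma -> lang X t ->
  sigma_word sigma t = al ++ w ++ be -> lang (image_space X sigma) w.
Proof.
move=> ne [x [Xx [i ht]]] hs.
have hW : W sigma x i (size t) = al ++ w ++ be by rewrite /W -ht.
exists (zz sigma x l); split.
  exists x, (zz sigma x l), 0%N; split => //.
  - exact: zz_img.
  - by have := ne (x 0); case: (sigma (x 0)).
  - by move=> j; rewrite addr0.
exists (pos sigma x i + (size al)%:Z).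
rewrite (@factor_at_sub _ _ _ (size (W sigma x i (size t)))); last first.
  by rewrite hW !size_cat; lia.
by rewrite zz_factor // hW drop_size_cat // take_size_cat.
Qed.

Lemma decode (A B : finType) (X : (int -> A) -> Prop) (sigma : A -> seq B) w :
  non_erasing sigma -> lang (image_space X sigma) w ->
  exists t al be, [/\ lang X t, al != [::], be != [::] &
                     sigma_word sigma t = al ++ w ++ be].
Proof.
move=> ne [y [[x [z [k [Xx hz hk hy]]]] [j hw]]].
have hw' : w = factor_at z (j + k%:Z) (size w).
  rewrite {1}hw /factor_at; apply: eq_map => n /=; by rewrite hy -!addrA (addrC k%:Z).
set q := j + k%:Z; set N := (absz q).+1; set i0 := - N%:Z.
set m := (N + N + size w)%N.
set F := W sigma x i0 m.
have hF := img_factor hz i0 m; rewrite -/F in hF.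
have hlo := P_low x ne N.
have hup := P_up x ne (N + size w).
have e1 : pos sigma x (i0 + m%:Z) = pos sigma x (0 + (N + size w)%N%:Z).
  by congr pos; rewrite /i0 /m; lia.
have e2 := pos_W sigma x i0 m; rewrite e1 (pos_W sigma x 0) P0 add0r in e2.
have hs := size_W x ne 0 (N + size w).
set a := absz (q - pos sigma x i0).
have ha1 : (0 < a)%N by move: hlo; rewrite /a /i0 /N /q; lia.
have ha2 : (a + size w < size F)%N.
  move: hlo e2 hs; rewrite /a /F /i0 /N /q; lia.
have hq : j + k%:Z = pos sigma x i0 + a%:Z.
  by move: hlo; rewrite /a /i0 /N /q; lia.
clearbody a.
exists (factor_at x i0 m), (take a F), (drop (size w) (drop a F)); split.
- by exists x; split => //; exists i0; rewrite size_factor_at.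
- by rewrite -size_eq0 size_take; case: ltnP => _; rewrite -lt0n // (leq_ltn_trans (leq0n _) ha2).
- by rewrite -size_eq0 !size_drop -lt0n -subnDA subn_gt0.
- have -> : sigma_word sigma (factor_at x i0 m) = F by [].
  rewrite {1}hw' hq.
  rewrite (@factor_at_sub _ _ _ (size F)); last exact: ltnW.
  by rewrite hF !cat_take_drop.
Qed.

End Enc.


Section Sync.
Variables (A B : finType) (sigma : A -> seq B) (l : B).
Hypothesis slp : strongly_left_proper sigma l.
Hypothesis inj : injective (sigma_word sigma).
Notation sw := (sigma_word sigma).

Lemma slp_form a : exists w, sigma a = l :: w /\ l \notin w.
Proof.
have [[w hw] hc] := slp a; exists w; split => //.
apply/count_memPn; move: hc; rewrite hw /= eqxx add1n; by case.
Qed.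

Lemma sw_cons a t : sw (a :: t) = sigma a ++ sw t.
Proof. by []. Qed.

Lemma sw_cat t1 t2 : sw (t1 ++ t2) = sw t1 ++ sw t2.
Proof. by rewrite /sigma_word map_cat flatten_cat. Qed.

Lemma sw_rcons t a : sw (rcons t a) = sw t ++ sigma a.
Proof. by rewrite /sigma_word map_rcons flatten_rcons. Qed.

Lemma sw_head t : t != [::] -> exists g, sw t = l :: g.
Proof.
case: t => [|a t] // _; have [w [hw _]] := slp_form a.
by exists (w ++ sw t); rewrite sw_cons hw.
Qed.

Lemma sigma_inj : injective sigma.
Proof.
move=> a b h; have : sw [:: a] = sw [:: b] by rewrite /sigma_word /= h.
by move/inj => [].
Qed.

Lemma L1 t al g : sw t = al ++ l :: g ->
  exists t1 t2, [/\ t = t1 ++ t2, sw t1 = al & sw t2 = l :: g].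
Proof.
elim: t al => [|a t IH] al.
  by rewrite /sigma_word /=; case: al.
case: al => [|e al] h.
  by exists [::], (a :: t); split.
have [w [hw hn]] := slp_form a.
move: h; rewrite sw_cons hw /= => -[<- h].
have [[r [h1 h2]]|[r [h1 h2]]] := catEq (esym h).
- have [t1 [t2 [-> h3 h4]]] := IH r h2.
  by exists (a :: t1), t2; split => //; rewrite sw_cons hw h3 h1.
- case: r h1 h2 => [|e' r] h1 h2.
    rewrite cats0 in h1; subst w.
    by exists [:: a], t; split => //; rewrite /sigma_word /= hw cats0.
  by case: h2 => he _; move: hn; rewrite h1 -he mem_cat inE eqxx orbT.
Qed.

Lemma sync t al s v p' be :
  sw t = al ++ s ++ sw v ++ (l :: p') ++ be -> al != [::] ->
  l \notin s -> l \notin p' ->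
  exists t1 a b t2 al2 be1,
    [/\ t = t1 ++ a :: v ++ b :: t2, sigma a = al2 ++ s, al2 != [::],
        al = sw t1 ++ al2 &
        (sigma b = (l :: p') ++ be1 /\ be = be1 ++ sw t2)].
Proof.
move=> h hal hs hp.
have [g hg] : exists g, sw v ++ (l :: p') ++ be = l :: g.
  case: v {h} => [|a v]; first by exists (p' ++ be).
  have [g hg] := @sw_head (a :: v) isT.
  by exists (g ++ l :: p' ++ be); rewrite hg.
move: h; rewrite catA hg => /L1 [t1 [t2 [ht h1 h2]]].
move: h2; rewrite -hg => h2.
have [t3 [t4 [ht2 h3 h4]]] := L1 h2.
move: h3 => /inj h3; subst t3 t2.
case/lastP: t1 ht h1 => [|t1 a] ht h1.
  by move: h1 hal; rewrite /sigma_word /=; case: al.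
clear h2; case: t4 ht h4 => [|b t5] ht h4.
  by move: h4; rewrite /sigma_word.
rewrite sw_rcons in h1.
have [[r [e1 e2]]|[r [e1 e2]]] := catEq h1.
  have [w [hw _]] := slp_form a.
  by move: hs; rewrite e2 hw mem_cat inE eqxx orbT.
have hr : r != [::].
  apply/negP => /eqP hr0; subst r.
  have [w [hw _]] := slp_form a.
  by move: hs; rewrite /= in e2; rewrite -e2 hw inE eqxx.
rewrite sw_cons in h4.
have [[r' [f1 f2]]|[r' [f1 f2]]] := catEq (h4 : sigma b ++ sw t5 = (l :: p') ++ be).
  exists t1, a, b, t5, r, r'; split => //.
  by rewrite ht cat_rcons.
case: r' f1 f2 => [|e r'] f1 f2.
  exists t1, a, b, t5, r, [::]; split => //; last by split; [rewrite f1 !cats0 | rewrite f2].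
  by rewrite ht cat_rcons.
case: t5 {ht h4} f2 => [|c t5] f2; first by move: f2; rewrite /sigma_word.
have [w [hw _]] := slp_form c.
move: f2; rewrite sw_cons hw => -[he _].
have [wb [hb _]] := slp_form b.
move: f1 hp; rewrite hb /= => -[->]; rewrite he mem_cat inE eqxx orbT.
done.
Qed.
End Sync.


Lemma match4 (T : Type) (U : eqType) (Q : T -> Prop) (C D : T -> U) q1 q2 q3 q4 :
  Q q1 -> Q q2 -> Q q3 -> Q q4 -> C q1 != C q2 -> D q3 != D q4 ->
  exists r1 r2, [/\ Q r1, Q r2, C r1 != C r2 & D r1 != D r2].
Proof.
move=> h1 h2 h3 h4 hc hd.
case: (eqVneq (D q1) (D q2)) => [e12|ne12]; last by exists q1, q2.
have [q [hq hDq]] : exists q, Q q /\ D q != D q1.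
  case: (eqVneq (D q3) (D q1)) => [e3|ne3]; last by exists q3.
  by exists q4; split => //; rewrite -e3 eq_sym.
case: (eqVneq (C q) (C q1)) => [e|ne].
- exists q2, q; split => //; first by rewrite e eq_sym.
  by rewrite -e12 eq_sym.
- by exists q1, q; split => //; rewrite eq_sym.
Qed.

Section Main.
Variables (A B : finType) (X : (int -> A) -> Prop) (sigma : A -> seq B) (l : B).
Hypothesis ne : non_erasing sigma.
Hypothesis inj : injective (sigma_word sigma).
Hypothesis slp : strongly_left_proper sigma l.
Notation sw := (sigma_word sigma).
Notation Y := (image_space X sigma).

Lemma fwd v u : bispecial (lang Y) u -> ext_image X sigma l u v ->
  exists a1 b1 a2 b2,
    [/\ ext_pair X v a1 b1, ext_pair X v a2 b2, a1 != a2, b1 != b2 &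
        u = lcs (sigma a1) (sigma a2) ++ sw v ++ lcp (sigma b1) (sigma b2)].
Proof.
move=> [hu [c1 [c2 [hc hc1 hc2]]] [d1 [d2 [hd hd1 hd2]]]].
move=> [_ _ _ [s [p [a [b [_ hab /andP[/suffixP [r hr] hsz] /andP[/prefixP [r' hr'] hp0] hueq]]]]]].
have hs : l \notin s.
  have [w [hw hn]] := slp_form slp a.
  case: r hr hsz => [|e r] hr hsz; first by rewrite hr ltnn in hsz.
  by move: hr; rewrite hw => -[_ hw']; move: hn; rewrite hw' mem_cat negb_or => /andP[].
have [p' [hpe hp']] : exists p', p = l :: p' /\ l \notin p'.
  have [w [hw hn]] := slp_form slp b.
  case: p hr' hp0 hueq => [|e p'] hr' hp0 hueq; first by rewrite eqxx in hp0.
  move: hr'; rewrite hw => -[<- hwe]; exists p'; split => //.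
  by move: hn; rewrite hwe mem_cat negb_or => /andP[].
set Q := fun q : A * A => [/\ ext_pair X v q.1 q.2,
     exists al2, al2 != [::] /\ sigma q.1 = al2 ++ s &
     exists be1, sigma q.2 = p ++ be1].
set C := fun q : A * A => nth l (rev (sigma q.1)) (size s).
set D := fun q : A * A => nth l (sigma q.2) (size p).
have occ : forall t al be, lang X t -> sw t = al ++ u ++ be -> al != [::] ->
    be != [::] -> exists q, [/\ Q q, (forall al0 c, al = rcons al0 c -> C q = c) &
                              (forall d be0, be = d :: be0 -> D q = d)].
  move=> t al be ht heq hal hbe.
  move: heq; rewrite hueq hpe -!catA => heq.
  have [t1 [a0 [b0 [t2 [al2 [be1 [et ea hal2 eal [eb ebe]]]]]]]] :=
    sync slp inj heq hal hs hp'.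
  exists (a0, b0); split.
  - split => /=; last by exists be1; rewrite hpe.
      apply: (@lang_infix _ _ t1 _ t2).
      by rewrite /= cat_rcons -et.
    by exists al2.
  - move=> al0 c hal0; rewrite /C /= ea rev_cat nth_cat size_rev ltnn subnn.
    case/lastP: al2 hal2 eal ea => [|al2' c'] // _ eal _.
    by move: eal; rewrite hal0 -rcons_cat rev_rcons => /rcons_inj [_ ->].
  - move=> d be0 hbe0; rewrite /D /= eb -hpe nth_cat ltnn subnn.
    case: be1 ebe {eb} => [|e be1] /=; last by rewrite hbe0 => -[->].
    case: t2 {et} => [|c t2]; first by rewrite hbe0.
    have [w [hw _]] := slp_form slp c.
    by rewrite hbe0 sw_cons hw => -[->].
have [q1 [hq1 hC1 _]] : exists q, [/\ Q q, C q = c1 & True].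
  have [t [al [be [ht hal hbe heq]]]] := decode ne hc1.
  have [q [hq hC _]] := occ t (rcons al c1) be ht
     ltac:(by rewrite heq cat_rcons) ltac:(by case: al {hal heq}) hbe.
  by exists q; split => //; apply: hC.
have [q2 [hq2 hC2 _]] : exists q, [/\ Q q, C q = c2 & True].
  have [t [al [be [ht hal hbe heq]]]] := decode ne hc2.
  have [q [hq hC _]] := occ t (rcons al c2) be ht
     ltac:(by rewrite heq cat_rcons) ltac:(by case: al {hal heq}) hbe.
  by exists q; split => //; apply: hC.
have [q3 [hq3 hD3 _]] : exists q, [/\ Q q, D q = d1 & True].
  have [t [al [be [ht hal hbe heq]]]] := decode ne hd1.
  have [q [hq _ hD]] := occ t al (d1 :: be) ht
     ltac:(by rewrite heq -cats1 -catA) hal isT.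
  by exists q; split => //; apply: hD.
have [q4 [hq4 hD4 _]] : exists q, [/\ Q q, D q = d2 & True].
  have [t [al [be [ht hal hbe heq]]]] := decode ne hd2.
  have [q [hq _ hD]] := occ t al (d2 :: be) ht
     ltac:(by rewrite heq -cats1 -catA) hal isT.
  by exists q; split => //; apply: hD.
have [[x1 y1] [[x2 y2] [[e1 [al1 [_ ha1]] [be1 hb1]] [e2 [al2 [_ ha2]] [be2 hb2]] hC hD]]] :=
  @match4 _ _ Q C D q1 q2 q3 q4 hq1 hq2 hq3 hq4 ltac:(by rewrite hC1 hC2) ltac:(by rewrite hD3 hD4).
have hx : x1 != x2.
  by apply/eqP => ex; move: hC; rewrite /C /= ex eqxx.
have hy : y1 != y2.
  by apply/eqP => ey; move: hD; rewrite /D /= ey eqxx.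
move: hC hD; rewrite /C /D /= ha1 ha2 hb1 hb2 !rev_cat !nth_cat size_rev !ltnn !subnn.
move=> hC hD.
exists x1, y1, x2, y2; split => //.
by rewrite hueq /lcs ha1 ha2 hb1 hb2 !rev_cat (lcp_cat _ hC) revK (lcp_cat _ hD).
Qed.

Lemma bwd v a1 b1 a2 b2 u : ext_pair X v a1 b1 -> ext_pair X v a2 b2 ->
  a1 != a2 -> b1 != b2 -> lang X v ->
  u = lcs (sigma a1) (sigma a2) ++ sw v ++ lcp (sigma b1) (sigma b2) ->
  bispecial (lang Y) u /\ ext_image X sigma l u v.
Proof.
move=> h1 h2 na nb hv hu.
set s := lcs (sigma a1) (sigma a2) in hu.
set p := lcp (sigma b1) (sigma b2) in hu.
have [wb1 [hb1 nb1]] := slp_form slp b1.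
have [wb2 [hb2 nb2]] := slp_form slp b2.
have [r1 [r2 [er1 er2 hr]]] := lcp_spec (sigma b1) (sigma b2).
rewrite -/p in er1 er2.
have hpl : p = l :: lcp wb1 wb2 by rewrite /p hb1 hb2 /= eqxx.
have hD : nth l r1 0 != nth l r2 0.
  case: r1 er1 hr => [|e1 r1] er1 hr; case: r2 er2 hr => [|e2 r2] er2 hr /=.
  - by move: nb; rewrite (sigma_inj inj (etrans er1 (esym er2))) eqxx.
  - move: er2; rewrite hb2 hpl /= => -[hw2]; apply/eqP => he.
    by move: nb2; rewrite hw2 -he mem_cat inE eqxx orbT.
  - move: er1; rewrite hb1 hpl /= => -[hw1]; apply/eqP => he.
    by move: nb1; rewrite hw1 he mem_cat inE eqxx orbT.
  - exact: hr.
have [ra1 [ra2 [el1 el2 hl]]] := lcp_spec (rev (sigma a1)) (rev (sigma a2)).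
have es1 : sigma a1 = rev ra1 ++ s by rewrite /s /lcs -rev_cat -el1 revK.
have es2 : sigma a2 = rev ra2 ++ s by rewrite /s /lcs -rev_cat -el2 revK.
have key : forall x y R, sigma x = s -> sigma y = R ++ s -> R != [::] -> False.
  move=> x y R hx hy hR.
  have [wx [hwx _]] := slp_form slp x; have [wy [hwy nwy]] := slp_form slp y.
  case: R hy hR => [|x0 y0] // hy _.
  move: hy; rewrite hwy /= => -[_ hwy'].
  by move: nwy; rewrite hwy' mem_cat -hx hwx inE eqxx orbT.
have nrev : forall (c : B) ra, rev (c :: ra) != [::].
  by move=> c ra; rewrite rev_cons; case: (rev ra).
have [c1 [ra1' hra1]] : exists c ra, ra1 = c :: ra.
  case: ra1 el1 es1 hl => [|c ra] el1 es1 hl; last by exists c, ra.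
  exfalso; case: ra2 el2 es2 hl => [|c' ra'] el2 es2 hl.
    by move: na; rewrite (sigma_inj inj (etrans es1 (esym es2))) eqxx.
  exact: (key a1 a2 (rev (c' :: ra')) es1 es2 (nrev _ _)).
have [c2 [ra2' hra2]] : exists c ra, ra2 = c :: ra.
  case: ra2 el2 es2 hl => [|c ra] el2 es2 hl; last by exists c, ra.
  exfalso; rewrite hra1 in es1.
  exact: (key a2 a1 (rev (c1 :: ra1')) es2 es1 (nrev _ _)).
have hc : c1 != c2 := hl _ _ _ _ hra1 hra2.
have es1' : sigma a1 = rev ra1' ++ c1 :: s by rewrite es1 hra1 rev_cons cat_rcons.
have es2' : sigma a2 = rev ra2' ++ c2 :: s by rewrite es2 hra2 rev_cons cat_rcons.
have ext : forall a b c ra r, ext_pair X v a b -> sigma a = rev ra ++ c :: s ->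
    sigma b = p ++ r ->
    [/\ lang Y u, lang Y (c :: u) & lang Y (rcons u (nth l r 0))].
  move=> a b c ra r hab ha hb.
  have [e he] := lang_rcons hab.
  have [we [hwe _]] := slp_form slp e.
  have hsw : sw (rcons (a :: rcons v b) e) =
      rev ra ++ c :: s ++ sw v ++ p ++ r ++ l :: we.
    by rewrite sw_rcons sw_cons sw_rcons ha hb hwe -!catA.
  split.
  - apply: (@encode _ _ X sigma l _ (rcons (rev ra) c) _ (r ++ l :: we) ne he).
    by rewrite hsw hu cat_rcons -!catA.
  - apply: (@encode _ _ X sigma l _ (rev ra) _ (r ++ l :: we) ne he).
    by rewrite hsw hu /= -!catA.
  - have [rest hrest] : exists rest, r ++ l :: we = nth l r 0 :: rest.
      by case: r {hb hsw} => [|x r]; [exists we | exists (r ++ l :: we)].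
    apply: (@encode _ _ X sigma l _ (rcons (rev ra) c) _ rest ne he).
    by rewrite hsw hu cat_rcons -cats1 -!catA /= -hrest.
have [hu1 hc1 hd1] := ext _ _ _ _ _ h1 es1' er1.
have [_ hc2 hd2] := ext _ _ _ _ _ h2 es2' er2.
have hin : l \in u by rewrite hu hpl !mem_cat inE eqxx !orbT.
split.
  split => //; first by exists c1, c2.
  by exists (nth l r1 0), (nth l r2 0).
split => //; first by case: (u) hin.
exists s, p, a1, b1; split => //.
- apply/andP; split; first by apply/suffixP; exists (rev ra1' ++ [:: c1]); rewrite es1' -catA.
  by rewrite es1' size_cat /= addnS ltnS leq_addl.
- apply/andP; split; last by rewrite hpl.
  by apply/prefixP; exists r1.
Qed.

End Main.


Theorem corollary4p2 (A B : finType) (X : (int -> A) -> Prop)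
  (sigma : A -> seq B) (l : B) (v : seq A) :
  shift_space X ->
  non_erasing sigma ->
  injective (sigma_word sigma) ->
  strongly_left_proper sigma l ->
  lang X v ->
  (forall u : seq B,
     (bispecial (lang (image_space X sigma)) u /\ ext_image X sigma l u v) <->
     (exists (a1 b1 a2 b2 : A),
        [/\ ext_pair X v a1 b1, ext_pair X v a2 b2, a1 != a2, b1 != b2 &
            u = lcs (sigma a1) (sigma a2) ++ sigma_word sigma v
                ++ lcp (sigma b1) (sigma b2)]))
  /\
  (forall u : seq B,
     bispecial (lang (image_space X sigma)) u -> ext_image X sigma l u v ->
     bispecial (lang X) v).
Proof.
move=> _ ne inj slp hv; split.
- move=> u; split.
  + by case=> hb he; apply: (fwd ne inj slp hb he).
  + case=> [a1 [b1 [a2 [b2 [h1 h2 na nb hu]]]]].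
    exact: (bwd ne inj slp h1 h2 na nb hv hu).
- move=> u hb he.
  have [a1 [b1 [a2 [b2 [h1 h2 na nb _]]]]] := fwd ne inj slp hb he.
  split => //.
  + exists a1, a2; split => //.
    * by apply: (@lang_infix _ _ [::] _ [:: b1]); rewrite /= cats1.
    * by apply: (@lang_infix _ _ [::] _ [:: b2]); rewrite /= cats1.
  + exists b1, b2; split => //.
    * by apply: (@lang_infix _ _ [:: a1] _ [::]); rewrite cats0.
    * by apply: (@lang_infix _ _ [:: a2] _ [::]); rewrite cats0.
Qed.
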